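(* Let $\theta_\ast>0$ and $\sigma>0$. There exists a constant $C(\theta_\ast,\sigma^2)>0$ such that for every $1$-Lipschitz function $\ell:\mathbb R\to\mathbb R$ with $\ell(0)=0$ and every integer $k\ge1$, there exists a polynomial $P_{k-1}(\theta)=\sum_{x=0}^{k-1}c_x\theta^x$ whose coefficients satisfy $$|c_x|\le\frac{C(\theta_\ast,\sigma^2)(x+1)^{1/2}2^x\big(1+(x/(e\sigma^2))^{x/2}\big)}{x!},\qquad 0\le x\le k-1,$$ and such that $$\sup_{\theta\in[0,\theta_\ast]}\big|\ell_\sigma(\theta)-\ell_\sigma(0)-e^{-\theta}P_{k-1}(\theta)\big|\le\frac{C(\theta_\ast,\sigma^2)(k+1)^{1/2}(2\theta_\ast)^k\big(1+(k/(e\sigma^2))^{k/2}\big)}{k!}.$$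
   Context: $\varphi_\sigma$ is the density of $\mathcal N(0,\sigma^2)$ and $\ell_\sigma=\ell\ast\varphi_\sigma$, i.e. $\ell_\sigma(\theta)=\int_{\mathbb R}\ell(\theta-y)\varphi_\sigma(y)\,\mathrm dy$. The convention $0^0=1$ is used. *)

(* Defs.v *)
From Stdlib Require Import Reals.
From Coquelicot Require Import Coquelicot.
Open Scope R_scope.

Definition gauss_density (sigma y : R) : R :=
  exp (- (y ^ 2) / (2 * sigma ^ 2)) / (sqrt (2 * PI) * sigma).

Definition smoothed_loss (l : R -> R) (sigma theta : R) : R :=
  RInt_gen (fun y => l (theta - y) * gauss_density sigma y)
           (Rbar_locally m_infty) (Rbar_locally p_infty).

Definition one_lipschitz (l : R -> R) : Prop :=
  forall x y : R, Rabs (l x - l y) <= Rabs (x - y).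

(* (n / (e sigma^2))^(n/2) with the convention 0^0 = 1 *)
Definition pw_term (n : nat) (sigma : R) : R :=
  match n with
  | O => 1
  | _ => Rpower (INR n / (exp 1 * sigma ^ 2)) (INR n / 2)
  end.

(* Main.v *)
Require Import Defs.
From Stdlib Require Import Reals.
From Coquelicot Require Import Coquelicot.
From Stdlib Require Import Lra Lia Psatz Arith.
Open Scope R_scope.

Definition Good (f : R -> R) (l : R) := forall eps, 0 < eps -> exists M, forall a b, a < -M -> M < b -> Rabs (RInt f a b - l) < eps.

Lemma ex_RInt_cont (f : R -> R) a b : (forall x, continuous f x) -> ex_RInt f a b.
Proof. intros H; apply (ex_RInt_continuous (V:=R_CompleteNormedModule)); intros; apply H. Qed.

Lemma Good_RInt_gen f l : (forall x, continuous f x) -> Good f l ->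
  RInt_gen f (Rbar_locally m_infty) (Rbar_locally p_infty) = l.
Proof.
  intros Hc HG. apply is_RInt_gen_unique.
  intros P [eps Heps].
  destruct (HG eps (cond_pos eps)) as [M HM].
  exists (fun a => a < - M) (fun b => M < b).
  - exists (-M). intros; lra.
  - exists M. intros; lra.
  - intros a b Ha Hb. exists (RInt f a b). split.
    + apply RInt_correct, ex_RInt_cont, Hc.
    + apply Heps. apply HM; auto.
Qed.

Lemma cont_of_pt (f : R -> R) : (forall x, continuity_pt f x) -> forall x, continuous f x.
Proof. intros H x; apply continuity_pt_filterlim, H. Qed.

Lemma Good_plus f g l1 l2 : (forall x, continuous f x) -> (forall x, continuous g x) ->
  Good f l1 -> Good g l2 -> Good (fun x => f x + g x) (l1 + l2).
Proof.
  intros Hf Hg H1 H2 eps Heps.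
  destruct (H1 (eps/2)) as [M1 HM1]; [lra|].
  destruct (H2 (eps/2)) as [M2 HM2]; [lra|].
  exists (Rmax M1 M2). intros a b Ha Hb.
  assert (E: RInt (fun x => f x + g x) a b = RInt f a b + RInt g a b).
  { apply (RInt_plus (V:=R_CompleteNormedModule)); apply ex_RInt_cont; auto. }
  rewrite E.
  assert (A1 := HM1 a b ltac:(generalize (Rmax_l M1 M2); lra) ltac:(generalize (Rmax_l M1 M2); lra)).
  assert (A2 := HM2 a b ltac:(generalize (Rmax_r M1 M2); lra) ltac:(generalize (Rmax_r M1 M2); lra)).
  apply Rabs_def1; apply Rabs_def2 in A1; apply Rabs_def2 in A2; lra.
Qed.

Lemma Good_scal f c l : (forall x, continuous f x) -> Good f l -> Good (fun x => c * f x) (c * l).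
Proof.
  intros Hf H eps Heps.
  destruct (H (eps / (Rabs c + 1))) as [M HM].
  { apply Rdiv_lt_0_compat; [lra| generalize (Rabs_pos c); lra]. }
  exists M. intros a b Ha Hb.
  assert (E: RInt (fun x => c * f x) a b = c * RInt f a b).
  { apply (RInt_scal (V:=R_CompleteNormedModule)); apply ex_RInt_cont; auto. }
  rewrite E.
  replace (c * RInt f a b - c * l) with (c * (RInt f a b - l)) by ring.
  rewrite Rabs_mult.
  specialize (HM a b Ha Hb).
  assert (0 <= Rabs c) by apply Rabs_pos.
  apply Rle_lt_trans with (Rabs c * (eps / (Rabs c + 1))).
  { apply Rmult_le_compat_l; lra. }
  apply Rlt_le_trans with ((Rabs c + 1) * (eps / (Rabs c + 1))).
  { apply Rmult_lt_compat_r; [apply Rdiv_lt_0_compat; lra| lra]. }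
  right; field; lra.
Qed.

Lemma Good_ext f g l : (forall x, f x = g x) -> Good f l -> Good g l.
Proof.
  intros E H eps Heps. destruct (H eps Heps) as [M HM]. exists M. intros a b Ha Hb.
  rewrite <- (RInt_ext (V:=R_CompleteNormedModule) f g); [apply HM; auto| intros; apply E].
Qed.

Lemma Good_minus f g l1 l2 : (forall x, continuous f x) -> (forall x, continuous g x) ->
  Good f l1 -> Good g l2 -> Good (fun x => f x - g x) (l1 - l2).
Proof.
  intros Hf Hg H1 H2.
  replace (l1 - l2) with (l1 + (-1) * l2) by ring.
  apply Good_ext with (fun x => f x + (-1) * g x). { intros; ring. }
  apply Good_plus; auto.
  - intros x. apply (continuous_mult (fun _ => -1) g). apply continuous_const. apply Hg.
  - apply Good_scal; auto.
Qed.

Lemma RInt_atan_bound f K x y : (forall x, continuous f x) ->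
  (forall t, Rabs (f t) <= K / (1 + t^2)) ->
  Rabs (RInt f x y) <= K * Rabs (atan y - atan x).
Proof.
  intros Hc Hb.
  assert (K0: 0 <= K).
  { specialize (Hb 0). assert (0 <= Rabs (f 0)) by apply Rabs_pos.
    replace (1 + 0^2) with 1 in Hb by ring. lra. }
  assert (gen: forall x y, x <= y -> Rabs (RInt f x y) <= K * (atan y - atan x)).
  { clear x y. intros x y Hxy.
    eapply Rle_trans. apply abs_RInt_le; auto. apply ex_RInt_cont; auto.
    assert (Hi: is_RInt (fun t => K * / (1 + t^2)) x y (K * (atan y - atan x))).
    { assert (H := is_RInt_derive (V:=R_CompleteNormedModule) (fun t => K * atan t) (fun t => K * / (1 + t^2)) x y).
      assert (E: minus (K*atan y) (K*atan x) = K*(atan y - atan x)) by (unfold minus, plus, opp; simpl; ring).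
      rewrite <- E. apply H.
      - intros t _. apply is_derive_Reals.
        apply derivable_pt_lim_scal. apply derivable_pt_lim_atan.
      - intros t _. apply cont_of_pt. intros z. apply continuity_pt_mult.
        apply continuity_pt_const; intros u v; auto.
        apply continuity_pt_inv. apply continuity_pt_plus.
        apply continuity_pt_const; intros u v; auto.
        apply derivable_continuous_pt, derivable_pt_pow.
        assert (0 <= z^2) by (apply pow2_ge_0). lra. }
    rewrite <- (is_RInt_unique _ _ _ _ Hi).
    apply RInt_le; [exact Hxy| | |].
    - apply (ex_RInt_continuous (V:=R_CompleteNormedModule)). intros z _.
      apply (continuous_comp f Rabs). apply Hc. apply continuous_Rabs.
    - eexists; apply Hi.
    - intros t _. specialize (Hb t). unfold Rdiv in Hb. exact Hb. }
  destruct (Rle_dec x y) as [Hxy|Hxy].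
  - specialize (gen x y Hxy). assert (atan x <= atan y).
    { destruct Hxy as [Hxy|Hxy]. left; apply atan_increasing; auto. subst; lra. }
    rewrite (Rabs_right (atan y - atan x)) by lra. idtac. exact gen.
  - assert (Hyx: y <= x) by lra. specialize (gen y x Hyx).
    assert (atan y <= atan x).
    { destruct Hyx as [Hyx|Hyx]. left; apply atan_increasing; auto. subst; lra. }
    rewrite <- (opp_RInt_swap (V:=R_CompleteNormedModule)) by (apply ex_RInt_cont; auto).
    unfold opp; simpl. rewrite Rabs_Ropp.
    rewrite (Rabs_left1 (atan y - atan x)) by lra. replace (K * - (atan y - atan x)) with (K * (atan x - atan y)) by ring. exact gen.
Qed.

Lemma dom_K0 (f : R -> R) K : (forall t, Rabs (f t) <= K / (1 + t^2)) -> 0 <= K.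
Proof.
  intros Hb. specialize (Hb 0). assert (0 <= Rabs (f 0)) by apply Rabs_pos.
  replace (1 + 0^2) with 1 in Hb by ring. lra.
Qed.

Lemma atan_diff_lt x y : Rabs (atan y - atan x) < PI.
Proof.
  destruct (atan_bound x), (atan_bound y). apply Rabs_def1; lra.
Qed.

Lemma Good_bound f K l : (forall x, continuous f x) ->
  (forall t, Rabs (f t) <= K / (1 + t^2)) -> Good f l -> Rabs l <= K * PI.
Proof.
  intros Hc Hb HG.
  assert (K0 := dom_K0 f K Hb).
  destruct (Rle_dec (Rabs l) (K * PI)) as [H|H]; auto.
  exfalso. destruct (HG (Rabs l - K * PI)) as [M HM]; [lra|].
  specialize (HM (-M-1) (M+1) ltac:(lra) ltac:(lra)).
  assert (B := RInt_atan_bound f K (-M-1) (M+1) Hc Hb).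
  assert (B2 := atan_diff_lt (-M-1) (M+1)).
  assert (K * Rabs (atan (M + 1) - atan (- M - 1)) <= K * PI).
  { apply Rmult_le_compat_l; lra. }
  assert (Rabs l <= Rabs (RInt f (-M-1) (M+1) - l) + Rabs (RInt f (-M-1) (M+1))).
  { replace l with (RInt f (-M-1) (M+1) - (RInt f (-M-1) (M+1) - l)) at 1 by ring.
    eapply Rle_trans. apply Rabs_triang. rewrite Rabs_Ropp. lra. }
  lra.
Qed.

Lemma atan_near_0 : forall eta, 0 < eta -> exists d, 0 < d /\ forall x, Rabs x < d -> Rabs (atan x) < eta.
Proof.
  intros eta He.
  assert (C := derivable_continuous_pt _ _ (derivable_pt_atan 0)).
  destruct (C eta He) as [d [Hd Hx]].
  exists d. split; auto. intros x Hxd.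
  destruct (Req_dec x 0) as [->|Hne]. rewrite atan_0, Rabs_R0; auto.
  specialize (Hx x). simpl in Hx. unfold R_dist in Hx. rewrite atan_0 in Hx.
  replace (atan x) with (atan x - 0) by ring. apply Hx. split.
  - unfold D_x, no_cond. split; auto.
  - rewrite Rminus_0_r; auto.
Qed.

Lemma atan_tail eta : 0 < eta -> exists M, 0 < M /\ forall b, M < b -> PI/2 - eta < atan b.
Proof.
  intros He. destruct (atan_near_0 eta He) as [d [Hd H]].
  exists (/d). split. apply Rinv_0_lt_compat; auto.
  intros b Hb. assert (0 < b). { assert (0 < / d) by (apply Rinv_0_lt_compat; auto). lra. }
  assert (E := atan_inv b H0).
  assert (Rabs (/ b) < d).
  { rewrite Rabs_right by (left; apply Rinv_0_lt_compat; auto).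
    replace d with (/ / d) by (field; lra). apply Rinv_lt_contravar; auto.
    apply Rmult_lt_0_compat; auto. apply Rinv_0_lt_compat; auto. }
  specialize (H _ H1). apply Rabs_def2 in H. lra.
Qed.

Lemma dom_Good f K : (forall x, continuous f x) ->
  (forall t, Rabs (f t) <= K / (1 + t^2)) -> exists l, Good f l.
Proof.
  intros Hc Hb.
  assert (K0 := dom_K0 f K Hb).
  assert (Hcau : exists y : R, filterlim (fun ab : R * R => RInt f (fst ab) (snd ab))
     (filter_prod (Rbar_locally m_infty) (Rbar_locally p_infty)) (locally y)).
  { apply (filterlim_locally_cauchy (U := R_CompleteSpace)).
    intros eps.
    set (eta := eps / (2 * K + 1) / 2).
    assert (Heta : 0 < eta).
    { unfold eta. apply Rdiv_lt_0_compat; [|lra]. apply Rdiv_lt_0_compat; [apply cond_pos|lra]. }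
    destruct (atan_tail eta Heta) as [M [HM HMb]].
    exists (fun ab => fst ab < - M /\ M < snd ab). split.
    - exists (fun a => a < - M) (fun b => M < b).
      + exists (-M). intros; lra.
      + exists M. intros; lra.
      + intros a b Ha Hb'. simpl; auto.
    - intros [a b] [a' b'] [Ha Hb'] [Ha' Hb'']. simpl in *.
      change (Rabs (RInt f a' b' - RInt f a b) < eps).
      assert (Ex: forall x y, ex_RInt f x y) by (intros; apply ex_RInt_cont; auto).
      assert (E1: RInt f a b = RInt f a a' + RInt f a' b' + RInt f b' b).
      { rewrite <- (RInt_Chasles (V:=R_CompleteNormedModule) f a a' b) by auto.
        rewrite <- (RInt_Chasles (V:=R_CompleteNormedModule) f a' b' b) by auto.
        unfold plus; simpl; ring. }
      rewrite E1.
      assert (B1 := RInt_atan_bound f K a a' Hc Hb).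
      assert (B2 := RInt_atan_bound f K b' b Hc Hb).
      assert (T1 := HMb b Hb'). assert (T2 := HMb b' Hb'').
      assert (T3 := HMb (-a) ltac:(lra)). assert (T4 := HMb (-a') ltac:(lra)).
      rewrite atan_opp in T3, T4.
      destruct (atan_bound a), (atan_bound a'), (atan_bound b), (atan_bound b').
      assert (Rabs (atan a' - atan a) <= 2 * eta) by (apply Rabs_le; lra).
      assert (Rabs (atan b - atan b') <= 2 * eta) by (apply Rabs_le; lra).
      assert (K * (2 * eta) < eps / 2).
      { unfold eta. assert (0 < eps) by apply cond_pos.
        apply Rmult_lt_reg_l with (2 * K + 1); [lra|].
        field_simplify; [|lra]. nra. }
      assert (K * Rabs (atan a' - atan a) <= K * (2*eta)) by (apply Rmult_le_compat_l; lra).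
      assert (K * Rabs (atan b - atan b') <= K * (2*eta)) by (apply Rmult_le_compat_l; lra).
      replace (RInt f a' b' - (RInt f a a' + RInt f a' b' + RInt f b' b))
        with (- (RInt f a a' + RInt f b' b)) by ring.
      rewrite Rabs_Ropp. eapply Rle_lt_trans. apply Rabs_triang. lra. }
  destruct Hcau as [y Hy]. exists y.
  intros eps Heps.
  assert (Hl : locally y (fun z => Rabs (z - y) < eps)).
  { exists (mkposreal eps Heps). intros z Hz. apply Hz. }
  specialize (Hy _ Hl). destruct Hy as [Q R [M1 HQ] [M2 HR] HP].
  exists (Rmax (Rabs M1) (Rabs M2)). intros a b Ha Hb'.
  apply (HP a b).
  - apply HQ. generalize (Rmax_l (Rabs M1) (Rabs M2)) (Rle_abs (-M1)). rewrite Rabs_Ropp. lra.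
  - apply HR. generalize (Rmax_r (Rabs M1) (Rabs M2)) (Rle_abs M2). lra.
Qed.

Lemma Good_refl g th l : (forall x, continuous g x) -> Good g l -> Good (fun y => g (th - y)) l.
Proof.
  intros Hc HG eps Heps. destruct (HG eps Heps) as [M HM].
  exists (M + Rabs th). intros a b Ha Hb.
  assert (Hc2 : forall z, continuous (fun y => g (-1 * y + th)) z).
  { intros z. apply (continuous_comp (fun y => -1 * y + th) g); [|apply Hc].
    apply (ex_derive_continuous (fun y => -1 * y + th)). auto_derive. auto. }
  assert (E: RInt (fun y => g (th - y)) a b = RInt g (th - b) (th - a)).
  { assert (H := RInt_comp_lin (V:=R_CompleteNormedModule) g (-1) th a b (ex_RInt_cont _ _ _ Hc)).
    assert (H1: RInt (fun y => g (-1*y+th)) a b = RInt (fun y => g(th-y)) a b).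
    { apply RInt_ext. intros; f_equal; ring. }
    assert (H2 := RInt_scal (V:=R_CompleteNormedModule) (fun y => g (-1*y+th)) a b (-1) (ex_RInt_cont _ _ _ Hc2)).
    assert (H3: opp (RInt g (th-a) (th-b)) = RInt g (th-b) (th-a)).
    { apply (opp_RInt_swap (V:=R_CompleteNormedModule)). apply ex_RInt_cont; auto. }
    rewrite <- H3. replace (th - a) with (-1 * a + th) by ring. replace (th - b) with (-1 * b + th) by ring.
    rewrite <- H. rewrite H2, H1. unfold opp, scal; simpl. unfold mult; simpl. set (X := RInt (fun y : R => g (th - y)) a b). clearbody X. change R in X. change (@eq R X (- (-1 * X))). ring. }
  rewrite E. apply HM.
  - generalize (Rle_abs th). intros. lra.
  - generalize (Rle_abs (-th)); rewrite Rabs_Ropp. intros. lra.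
Qed.

Lemma cont_sum (F : nat -> R -> R) n : (forall i x, continuous (F i) x) ->
  forall x, continuous (fun u => sum_f_R0 (fun i => F i u) n) x.
Proof.
  intros H x. apply continuity_pt_filterlim. induction n as [|n IH]; simpl.
  - apply continuity_pt_filterlim, H.
  - apply continuity_pt_plus; auto. apply continuity_pt_filterlim, H.
Qed.

Lemma Good_sum (F : nat -> R -> R) (L : nat -> R) n : (forall i x, continuous (F i) x) ->
  (forall i, Good (F i) (L i)) -> Good (fun u => sum_f_R0 (fun i => F i u) n) (sum_f_R0 L n).
Proof.
  intros Hc HG. induction n as [|n IH]; simpl.
  - apply HG.
  - apply Good_plus; auto. apply cont_sum; auto.
Qed.

Definition ea (al : R) (j : nat) : R := al ^ j / INR (fact j).
Definition bc (c : R) (i : nat) : R :=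
  if Nat.even i then c ^ (Nat.div2 i) / INR (fact (Nat.div2 i)) else 0.
Definition dco (al c : R) (n : nat) : R := PS_mult (ea al) (bc c) n.

Lemma pow_n_R (y : R) k : @eq R (@pow_n (AbsRing.Ring R_AbsRing) y k) (y ^ k).
Proof. induction k; simpl; auto. Qed.

Lemma series_ea al x : is_series (fun j => ea al j * x ^ j) (exp (al * x)).
Proof.
  assert (H := is_exp_Reals (al * x)). unfold is_pseries in H.
  eapply is_series_ext; [|exact H]. intros n. simpl. rewrite pow_n_pow.
  unfold ea, scal; simpl; unfold mult; simpl. rewrite Rpow_mult_distr. field.
  apply not_0_INR, fact_neq_0.
Qed.

Lemma series_bc c x : is_series (fun i => bc c i * x ^ i) (exp (c * x ^ 2)).
Proof.
  assert (H1 : is_pseries (fun n => bc c (2 * n)) (x ^ 2) (exp (c * x ^ 2))).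
  { assert (H := is_exp_Reals (c * x ^ 2)). unfold is_pseries in *.
    eapply is_series_ext; [|exact H]. intros n. cbv beta. rewrite !pow_n_pow.
    unfold bc. rewrite Nat.even_even, Nat.div2_double.
    unfold scal; simpl; unfold mult; simpl. rewrite (pow_n_R (x*(x*1)) n). rewrite Rpow_mult_distr. field.
    apply not_0_INR, fact_neq_0. }
  assert (H2 : is_pseries (fun n => bc c (2 * n + 1)) (x ^ 2) 0).
  { assert (H : is_series (fun _ : nat => 0) 0).
    { apply is_series_Reals. intros eps Heps. exists 0%nat. intros n _.
      rewrite sum_eq_R0 by auto. unfold R_dist. rewrite Rminus_0_r, Rabs_R0. auto. }
    unfold is_pseries.
    eapply is_series_ext; [|exact H]. intros n. cbv beta.
    unfold bc. rewrite Nat.even_odd.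
    unfold scal; simpl; unfold mult; simpl. ring. }
  assert (H := is_pseries_odd_even (bc c) x _ _ H1 H2).
  replace (exp (c * x ^ 2)) with (exp (c * x ^ 2) + x * 0) by ring.
  unfold is_pseries in H. eapply is_series_ext; [|exact H].
  intros n. unfold scal; simpl; unfold mult; simpl. rewrite (pow_n_R x n). ring.
Qed.

Lemma fact_pos_R n : 0 < INR (fact n).
Proof. apply lt_0_INR, lt_O_fact. Qed.

Lemma abs_ea al j x : Rabs (ea al j * x ^ j) = ea (Rabs al) j * Rabs x ^ j.
Proof.
  unfold ea. rewrite Rabs_mult, Rabs_div, !RPow_abs.
  - rewrite (Rabs_right (INR (fact j))); [reflexivity|]. left; apply fact_pos_R.
  - apply Rgt_not_eq, fact_pos_R.
Qed.

Lemma abs_bc c i x : Rabs (bc c i * x ^ i) = bc (Rabs c) i * Rabs x ^ i.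
Proof.
  unfold bc. destruct (Nat.even i).
  - rewrite Rabs_mult, Rabs_div, !RPow_abs.
    + rewrite (Rabs_right (INR (fact _))); [reflexivity|]. left; apply fact_pos_R.
    + apply Rgt_not_eq, fact_pos_R.
  - rewrite Rmult_0_l, Rabs_R0. ring.
Qed.

Lemma ea_nonneg al j : 0 <= al -> 0 <= ea al j.
Proof. intros. unfold ea. apply Rdiv_le_0_compat. apply pow_le; auto. apply fact_pos_R. Qed.

Lemma bc_nonneg c i : 0 <= c -> 0 <= bc c i.
Proof. intros. unfold bc. destruct (Nat.even i); [|lra]. apply Rdiv_le_0_compat. apply pow_le; auto. apply fact_pos_R. Qed.

Lemma dco_nonneg al c n : 0 <= al -> 0 <= c -> 0 <= dco al c n.
Proof.
  intros. unfold dco, PS_mult. apply cond_pos_sum. intros k.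
  apply Rmult_le_pos; [apply ea_nonneg|apply bc_nonneg]; auto.
Qed.

Lemma dco_abs al c n : Rabs (dco al c n) <= dco (Rabs al) (Rabs c) n.
Proof.
  unfold dco, PS_mult. eapply Rle_trans. apply sum_f_R0_triangle.
  right. apply sum_eq. intros k _. rewrite Rabs_mult.
  assert (A := abs_ea al k 1). assert (B := abs_bc c (n - k) 1).
  rewrite pow1, !Rmult_1_r, Rabs_R1, pow1, Rmult_1_r in A. rewrite pow1, !Rmult_1_r, Rabs_R1, pow1, Rmult_1_r in B.
  rewrite A, B. reflexivity.
Qed.

Lemma series_prod al c x : is_series (fun n => dco al c n * x ^ n) (exp (al * x) * exp (c * x ^ 2)).
Proof.
  assert (H := is_series_mult _ _ _ _ (series_ea al x) (series_bc c x)).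
  eapply is_series_ext; [|apply H].
  - intros n. unfold dco, PS_mult. rewrite Rmult_comm, scal_sum. apply sum_eq.
    intros k Hk. assert (E: x^n = x^k * x^(n-k)) by (rewrite <- pow_add; f_equal; lia). rewrite E. ring.
  - eapply ex_series_ext; [|exists (exp (Rabs al * Rabs x)); apply (series_ea (Rabs al) (Rabs x))].
    intros n. rewrite abs_ea. reflexivity.
  - eapply ex_series_ext; [|exists (exp (Rabs c * Rabs x ^ 2)); apply (series_bc (Rabs c) (Rabs x))].
    intros n. rewrite abs_bc. reflexivity.
Qed.

Lemma sum_mono (a : nat -> R) N n : (forall k, 0 <= a k) -> (N <= n)%nat -> sum_f_R0 a N <= sum_f_R0 a n.
Proof.
  intros Ha H. induction H. lra. simpl. specialize (Ha (S m)). lra.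
Qed.

Lemma ps_le (a : nat -> R) l : is_series a l -> (forall k, 0 <= a k) -> forall N, sum_f_R0 a N <= l.
Proof.
  intros Hs Ha N. apply is_series_Reals in Hs.
  destruct (Rle_dec (sum_f_R0 a N) l) as [H|H]; auto. exfalso.
  destruct (Hs (sum_f_R0 a N - l)) as [N0 HN0]; [lra|].
  specialize (HN0 (max N N0) ltac:(lia)). unfold R_dist in HN0.
  assert (M := sum_mono a N (max N N0) Ha ltac:(lia)).
  apply Rabs_def2 in HN0. lra.
Qed.

Lemma term_le_sum (a : nat -> R) n : (forall k, 0 <= a k) -> a n <= sum_f_R0 a n.
Proof.
  intros Ha. destruct n; simpl. lra. assert (0 <= sum_f_R0 a n) by (apply cond_pos_sum; auto). lra.
Qed.

Lemma coef_bound al c r n : 0 < r -> Rabs (dco al c n) <= exp (Rabs al * r + Rabs c * r ^ 2) / r ^ n.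
Proof.
  intros Hr. assert (Hrn : 0 < r ^ n) by (apply pow_lt; auto).
  eapply Rle_trans. apply dco_abs.
  apply Rmult_le_reg_r with (r ^ n); auto. unfold Rdiv. rewrite Rmult_assoc, Rinv_l, Rmult_1_r by lra.
  assert (Hnn : forall k, 0 <= dco (Rabs al) (Rabs c) k * r ^ k).
  { intros k. apply Rmult_le_pos. apply dco_nonneg; apply Rabs_pos. apply pow_le; lra. }
  eapply Rle_trans. apply (term_le_sum (fun k => dco (Rabs al) (Rabs c) k * r ^ k) n Hnn).
  rewrite exp_plus. apply ps_le; auto. apply series_prod.
Qed.

Lemma pow_le1 y n : 0 <= y <= 1 -> y ^ n <= 1.
Proof.
  intros [H0 H1]. induction n; simpl. lra.
  replace 1 with (1 * 1) by ring. apply Rmult_le_compat; auto. apply pow_le; auto.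
Qed.

Lemma tail_bound al c r x m : 0 < r -> 0 <= x <= r ->
  Rabs (exp (al * x) * exp (c * x ^ 2) - sum_f_R0 (fun n => dco al c n * x ^ n) m)
  <= (x / r) ^ (S m) * exp (Rabs al * r + Rabs c * r ^ 2).
Proof.
  intros Hr Hx.
  set (B := (x / r) ^ (S m) * exp (Rabs al * r + Rabs c * r ^ 2)).
  set (T := fun N => sum_f_R0 (fun n => dco al c n * x ^ n) N).
  set (D := fun n => dco (Rabs al) (Rabs c) n * r ^ n).
  assert (HD : forall k, 0 <= D k).
  { intros k. unfold D. apply Rmult_le_pos. apply dco_nonneg; apply Rabs_pos. apply pow_le; lra. }
  assert (HL : is_series D (exp (Rabs al * r + Rabs c * r ^ 2))).
  { rewrite exp_plus. apply series_prod. }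
  assert (Hq : 0 <= x / r <= 1).
  { split. apply Rdiv_le_0_compat; lra. apply Rmult_le_reg_r with r; auto.
    unfold Rdiv. rewrite Rmult_assoc, Rinv_l, Rmult_1_r; lra. }
  assert (Key : forall N, (m < N)%nat -> Rabs (T N - T m) <= B).
  { intros N HN. unfold T. rewrite (tech2 _ m N HN).
    replace (sum_f_R0 (fun n : nat => dco al c n * x ^ n) m +
       sum_f_R0 (fun i : nat => dco al c (S m + i) * x ^ (S m + i)) (N - S m) -
       sum_f_R0 (fun n : nat => dco al c n * x ^ n) m) with
      (sum_f_R0 (fun i : nat => dco al c (S m + i) * x ^ (S m + i)) (N - S m)) by ring.
    eapply Rle_trans. apply sum_f_R0_triangle.
    apply Rle_trans with (sum_f_R0 (fun i => (x / r) ^ (S m) * D (S m + i)%nat) (N - S m)).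
    { apply sum_Rle. intros i _. rewrite Rabs_mult. unfold D.
      assert (E : x ^ (S m + i) = r ^ (S m + i) * ((x / r) ^ (S m) * (x / r) ^ i)).
      { rewrite <- pow_add, <- Rpow_mult_distr. f_equal. field. lra. }
      rewrite E. rewrite Rabs_mult, (Rabs_right (r ^ _)) by (left; apply pow_lt; auto).
      rewrite Rabs_mult, (Rabs_right ((x/r)^(S m))) by (apply Rle_ge, pow_le; lra).
      rewrite (Rabs_right ((x/r)^i)) by (apply Rle_ge, pow_le; lra).
      assert (A1 := dco_abs al c (S m + i)).
      assert (A2 := pow_le1 (x / r) i Hq).
      assert (A3 : 0 <= (x / r) ^ S m) by (apply pow_le; lra).
      assert (A4 : 0 <= r ^ (S m + i)) by (apply pow_le; lra).
      assert (A5 : 0 <= Rabs (dco al c (S m + i))) by apply Rabs_pos.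
      assert (A6 : 0 <= (x / r) ^ i) by (apply pow_le; lra).
      apply Rle_trans with (dco (Rabs al) (Rabs c) (S m + i) * (r ^ (S m + i) * ((x / r) ^ S m * 1))).
      - apply Rmult_le_compat; auto. apply Rmult_le_pos; auto. apply Rmult_le_pos; auto.
        apply Rmult_le_compat_l; auto. apply Rmult_le_compat_l; auto.
      - right; ring. }
    replace (sum_f_R0 (fun i => (x / r) ^ S m * D (S m + i)%nat) (N - S m)) with ((x / r) ^ S m * sum_f_R0 (fun i => D (S m + i)%nat) (N - S m)) by (rewrite scal_sum; apply sum_eq; intros; ring).
    apply Rmult_le_compat_l. apply pow_le; lra.
    apply Rle_trans with (sum_f_R0 D N).
    { rewrite (tech2 D m N HN). assert (0 <= sum_f_R0 D m) by (apply cond_pos_sum; auto). lra. }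
    apply ps_le; auto. }
  assert (HE := series_prod al c x). apply is_series_Reals in HE.
  apply Rnot_lt_le. intros Hlt.
  destruct (HE (Rabs (exp (al * x) * exp (c * x ^ 2) - T m) - B)) as [N0 HN0]; [lra|].
  specialize (HN0 (max N0 (S m)) ltac:(lia)). unfold R_dist in HN0.
  specialize (Key (max N0 (S m)) ltac:(lia)). fold (T (max N0 (S m))) in HN0.
  assert (Rabs (exp (al * x) * exp (c * x ^ 2) - T m) <=
     Rabs (T (max N0 (S m)) - (exp (al * x) * exp (c * x ^ 2))) + Rabs (T (max N0 (S m)) - T m)).
  { rewrite <- Rabs_Ropp with (T _ - _).
    eapply Rle_trans; [|apply Rabs_triang]. right. f_equal. ring. }
  fold T in Hlt. lra.
Qed.

Lemma fact_pos_R_tmp n : 0 < INR (fact n).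
Proof. apply lt_0_INR, lt_O_fact. Qed.

Lemma ln_le_sub1 z : 0 < z -> ln z <= z - 1.
Proof. intros Hz. assert (H := exp_ineq1_le (ln z)). rewrite exp_ln in H; lra. Qed.

Lemma ln2_bounds : / 2 < ln 2 <= 1.
Proof. split. apply ln_lt_2. assert (H := ln_le_sub1 2). lra. Qed.

Lemma exp_pow3 r : exp r ^ 3 = exp (3 * r).
Proof. replace (3 * r) with (r + r + r) by ring. rewrite !exp_plus. simpl. ring. Qed.

Lemma one_plus_cube r : 0 <= r -> (1 + r) ^ 3 <= exp (3 * r).
Proof.
  intros Hr. rewrite <- exp_pow3. apply pow_incr. split. lra. apply exp_ineq1_le.
Qed.

Lemma exp_mono a b : a <= b -> exp a <= exp b.
Proof. intros [H|H]. left; apply exp_increasing; auto. subst; lra. Qed.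

Lemma stirling_lite n : (1 <= n)%nat ->
  INR (fact n) <= exp (1 + ln (INR n) + INR n * ln (INR n) - INR n).
Proof.
  intros Hn. induction Hn as [|n Hn IH].
  - simpl. rewrite ln_1. replace (1 + 0 + 1 * 0 - 1) with 0 by ring. rewrite exp_0. lra.
  - rewrite fact_simpl, mult_INR, S_INR.
    assert (HN : 1 <= INR n) by (apply (le_INR 1); auto).
    assert (Hl : 1 <= (INR n + 1) * (ln (INR n + 1) - ln (INR n))).
    { assert (H := ln_le_sub1 (INR n / (INR n + 1))).
      unfold Rdiv in H. rewrite ln_mult, ln_Rinv in H by (try apply Rinv_0_lt_compat; lra).
      assert (H' : ln (INR n) - ln (INR n + 1) <= - / (INR n + 1)).
      { eapply Rle_trans. apply H. apply Rdiv_lt_0_compat; lra. right. field. lra. }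
      apply Rmult_le_reg_r with (/ (INR n + 1)). apply Rinv_0_lt_compat; lra.
      replace ((INR n + 1) * (ln (INR n + 1) - ln (INR n)) * / (INR n + 1))
        with (ln (INR n + 1) - ln (INR n)) by (field; lra). lra. }
    apply Rle_trans with ((INR n + 1) * exp (1 + ln (INR n) + INR n * ln (INR n) - INR n)).
    { apply Rmult_le_compat_l; lra. }
    rewrite <- (exp_ln (INR n + 1)) at 1 by lra. rewrite <- exp_plus.
    apply exp_mono. nra.
Qed.

Lemma ln_sqrt' y : 0 < y -> ln (sqrt y) = ln y / 2.
Proof.
  intros Hy. assert (Hs : 0 < sqrt y) by (apply sqrt_lt_R0; auto).
  assert (E : ln (sqrt y * sqrt y) = ln y) by (rewrite sqrt_sqrt; lra).
  rewrite ln_mult in E; lra.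
Qed.

Lemma pow_as_exp x n : 0 < x -> x ^ n = exp (INR n * ln x).
Proof. intros Hx. rewrite <- Rpower_pow by auto. reflexivity. Qed.

Lemma KL n s : 0 < s ->
  INR (fact n) * exp (INR n / 2) / (s * sqrt (INR n / 2)) ^ n
  <= exp 1 * (INR n + 1) * exp (INR n * ln 2 / 2) * pw_term n s.
Proof.
  intros Hs. destruct n as [|n'].
  - simpl. rewrite Rmult_0_l, Rdiv_0_l, exp_0. assert (H := exp_ineq1_le 1). lra.
  - set (n := S n'). set (N := INR n).
    assert (HN : 1 <= N) by (unfold N, n; rewrite S_INR; generalize (pos_INR n'); lra).
    assert (Hrho : 0 < s * sqrt (N / 2)) by (apply Rmult_lt_0_compat; auto; apply sqrt_lt_R0; lra).
    assert (Hpw : pw_term n s = exp (N / 2 * (ln N - (1 + 2 * ln s)))).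
    { unfold pw_term, n. fold n. unfold Rpower. fold N. f_equal. f_equal.
      unfold Rdiv. rewrite ln_mult, ln_Rinv, ln_mult, ln_exp by (try apply Rinv_0_lt_compat; try apply Rmult_lt_0_compat; try apply pow_lt; try apply exp_pos; lra).
      simpl. rewrite Rmult_1_r, ln_mult by lra. ring. }
    rewrite Hpw.
    rewrite (pow_as_exp _ _ Hrho). fold N.
    rewrite ln_mult, ln_sqrt' by (try apply sqrt_lt_R0; lra).
    replace (ln (N / 2)) with (ln N + - ln 2) by (unfold Rdiv; rewrite ln_mult, ln_Rinv; try lra; apply Rinv_0_lt_compat; lra).
    assert (SL := stirling_lite n ltac:(unfold n; lia)). fold N in SL.
    apply Rle_trans with (exp (1 + ln N + N * ln N - N) * exp (N / 2) / exp (N * (ln s + (ln N + - ln 2) / 2))).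
    { unfold Rdiv. apply Rmult_le_compat_r. left; apply Rinv_0_lt_compat, exp_pos.
      apply Rmult_le_compat_r. left; apply exp_pos. auto. }
    apply Rle_trans with (exp 1 * N * exp (N * ln 2 / 2) * exp (N / 2 * (ln N - (1 + 2 * ln s)))).
    { right. replace (exp 1 * N) with (exp (1 + ln N)) by (rewrite exp_plus, exp_ln; lra).
      unfold Rdiv. rewrite <- exp_Ropp, <- !exp_plus. f_equal. field. }
    repeat apply Rmult_le_compat_r; try (left; apply exp_pos).
    apply Rmult_le_compat_l; [left; apply exp_pos|lra].
Qed.

Lemma growth a y : 0 <= a -> 0 <= y ->
  (y + 1) * exp (a * sqrt y) <= (2 / (ln 2 / 2)) * exp (a ^ 2 / (2 * (ln 2 / 2))) * exp (ln 2 / 2 * y).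
Proof.
  intros Ha Hy. set (g := ln 2 / 2). assert (Hg : / 4 < g <= 1 / 2) by (unfold g; generalize ln2_bounds; lra).
  assert (H1 : y + 1 <= 2 / g * exp (g * y / 2)).
  { assert (H := exp_ineq1_le (g * y / 2)).
    apply Rmult_le_reg_l with (g / 2). lra.
    replace (g / 2 * (2 / g * exp (g * y / 2))) with (exp (g * y / 2)) by (field; lra). nra. }
  assert (H2 : a * sqrt y <= g * y / 2 + a ^ 2 / (2 * g)).
  { set (z := sqrt y). assert (Ez : y = z * z) by (unfold z; rewrite sqrt_sqrt; lra).
    rewrite Ez. apply Rmult_le_reg_l with (2 * g). lra.
    replace (2 * g * (g * (z * z) / 2 + a ^ 2 / (2 * g))) with (g * g * (z * z) + a ^ 2) by (field; lra).
    assert (0 <= (g*z - a)^2) by apply pow2_ge_0. nra. }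
  apply Rle_trans with (2 / g * exp (g * y / 2) * exp (g * y / 2 + a ^ 2 / (2 * g))).
  { apply Rmult_le_compat; try lra. left; apply exp_pos. apply exp_mono; auto. }
  right. rewrite Rmult_assoc, <- exp_plus. rewrite Rmult_assoc, <- exp_plus. f_equal. f_equal. field. lra.
Qed.

Definition rr (s t : R) (n : nat) := s * sqrt (INR n / 2) + t.
Definition Bnd (s t : R) (n : nat) := (1 + rr s t n) ^ 3 * exp (rr s t n + rr s t n ^ 2 / s ^ 2) / rr s t n ^ n.

Lemma rr_pos s t n : 0 < s -> 0 < t -> t <= rr s t n.
Proof.
  intros. unfold rr. assert (0 <= sqrt (INR n / 2)) by apply sqrt_pos. nra.
Qed.

Lemma Bnd_le s t : 0 < s -> 0 < t -> exists K3, 0 < K3 /\ forall n,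
  Bnd s t n <= K3 * 2 ^ n * pw_term n s / INR (fact n).
Proof.
  intros Hs Ht.
  set (a := (4 + 2 * t / s ^ 2) * s).
  set (Cg := (2 / (ln 2 / 2)) * exp (a ^ 2 / (2 * (ln 2 / 2)))).
  assert (HCg : 0 < Cg).
  { unfold Cg. apply Rmult_lt_0_compat. apply Rdiv_lt_0_compat. lra. generalize ln2_bounds; lra. apply exp_pos. }
  exists (exp (4 * t + t ^ 2 / s ^ 2) * exp 1 * Cg). split.
  { apply Rmult_lt_0_compat; auto. apply Rmult_lt_0_compat; apply exp_pos. }
  intros n. set (N := INR n). set (rho := s * sqrt (N / 2)).
  assert (HN : 0 <= N) by apply pos_INR.
  assert (Hrho0 : 0 <= rho) by (unfold rho; apply Rmult_le_pos; [lra|apply sqrt_pos]).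
  assert (Hrhon : 0 < rho ^ n).
  { destruct n. simpl; lra. apply pow_lt. unfold rho, N. apply Rmult_lt_0_compat; auto.
    apply sqrt_lt_R0. rewrite S_INR. generalize (pos_INR n); lra. }
  assert (Hr : rr s t n = rho + t) by reflexivity.
  assert (Hrho2 : rho ^ 2 = s ^ 2 * (N / 2)).
  { unfold rho. rewrite Rpow_mult_distr. simpl. rewrite !Rmult_1_r. rewrite sqrt_sqrt; lra. }
  assert (Hfact := fact_pos_R_tmp n).
  unfold Bnd. rewrite Hr.
  apply Rle_trans with (exp (4 * (rho + t) + (rho + t) ^ 2 / s ^ 2) / rho ^ n).
  { unfold Rdiv. apply Rmult_le_compat.
    - apply Rmult_le_pos. apply pow_le; lra. left; apply exp_pos.
    - left; apply Rinv_0_lt_compat, pow_lt; lra.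
    - replace (4 * (rho + t) + (rho + t) ^ 2 * / s ^ 2) with (3 * (rho + t) + ((rho + t) + (rho + t) ^ 2 * / s ^ 2)) by ring.
      rewrite (exp_plus (3 * (rho + t))). apply Rmult_le_compat_r. left; apply exp_pos. apply one_plus_cube; lra.
    - apply Rinv_le_contravar; auto. apply pow_incr; lra. }
  replace (4 * (rho + t) + (rho + t) ^ 2 / s ^ 2) with
    ((4 * t + t ^ 2 / s ^ 2) + (4 + 2 * t / s ^ 2) * rho + N / 2)
    by (replace (N / 2) with (rho ^ 2 / s ^ 2) by (rewrite Hrho2; field; lra); field; lra).
  rewrite (exp_plus (_ + _) (N / 2)), (exp_plus (4 * t + t ^ 2 / s ^ 2)).
  assert (K := KL n s Hs). fold N in K. fold rho in K.
  assert (Hsq : (4 + 2 * t / s ^ 2) * rho <= a * sqrt N).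
  { unfold a, rho. rewrite Rmult_assoc. apply Rmult_le_compat_l.
    assert (0 < s^2) by (apply pow_lt; lra). assert (0 <= t / s^2) by (apply Rdiv_le_0_compat; lra). lra.
    apply Rmult_le_compat_l. lra. apply sqrt_le_1_alt. lra. }
  assert (Gr := growth a N ltac:(unfold a; assert (0 < s^2) by (apply pow_lt; lra); assert (0 <= t / s^2) by (apply Rdiv_le_0_compat; lra); nra) HN).
  fold Cg in Gr.
  assert (E2 : 2 ^ n = exp (ln 2 / 2 * N) * exp (N * ln 2 / 2)).
  { rewrite <- exp_plus, pow_as_exp by lra. f_equal. unfold N; field. }
  rewrite E2.
  assert (Hpw : 0 <= pw_term n s).
  { destruct n; simpl. lra. unfold Rpower. left; apply exp_pos. }
  set (X := exp (4 * t + t ^ 2 / s ^ 2)).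
  assert (HX : 0 < X) by apply exp_pos.
  apply Rle_trans with (X * exp (a * sqrt N) * (exp 1 * (N + 1) * exp (N * ln 2 / 2) * pw_term n s / INR (fact n))).
  { replace (X * exp ((4 + 2 * t / s ^ 2) * rho) * exp (N / 2) / rho ^ n) with
      (X * exp ((4 + 2 * t / s ^ 2) * rho) * (INR (fact n) * exp (N / 2) / rho ^ n / INR (fact n))) by (field; lra).
    apply Rmult_le_compat.
    - apply Rmult_le_pos; [lra| left; apply exp_pos].
    - repeat apply Rmult_le_pos; try (left; apply exp_pos); try (left; apply Rinv_0_lt_compat; auto); lra.
    - apply Rmult_le_compat_l. lra. apply exp_mono. auto.
    - unfold Rdiv at 2. unfold Rdiv at 3. apply Rmult_le_compat_r. left; apply Rinv_0_lt_compat; auto. exact K. }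
  replace (X * exp (a * sqrt N) * (exp 1 * (N + 1) * exp (N * ln 2 / 2) * pw_term n s / INR (fact n)))
    with (X * exp 1 * ((N + 1) * exp (a * sqrt N)) * exp (N * ln 2 / 2) * pw_term n s / INR (fact n)) by (field; lra).
  replace (X * exp 1 * Cg * (exp (ln 2 / 2 * N) * exp (N * ln 2 / 2)) * pw_term n s / INR (fact n))
    with (X * exp 1 * (Cg * exp (ln 2 / 2 * N)) * exp (N * ln 2 / 2) * pw_term n s / INR (fact n)) by (field; lra).
  unfold Rdiv. apply Rmult_le_compat_r. left; apply Rinv_0_lt_compat; auto.
  apply Rmult_le_compat_r; auto. apply Rmult_le_compat_r. left; apply exp_pos.
  apply Rmult_le_compat_l. apply Rmult_le_pos; [lra|left; apply exp_pos]. exact Gr.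
Qed.

Definition N0 s := sqrt (2 * PI) * s.
Definition K0 s := exp (9 * s ^ 2 / 2) / N0 s.

Lemma N0_pos s : 0 < s -> 0 < N0 s.
Proof. intros. unfold N0. apply Rmult_lt_0_compat; auto. apply sqrt_lt_R0. generalize PI_RGT_0; lra. Qed.

Lemma G_bound s u r : 0 < s -> 0 <= r ->
  (1 + u ^ 2) * Rabs u * gauss_density s u * exp (Rabs (1 + u / s ^ 2) * r)
  <= K0 s * ((1 + r) ^ 3 * exp (r + r ^ 2 / (2 * s ^ 2))).
Proof.
  intros Hs Hr. assert (HN := N0_pos s Hs).
  assert (Hs2 : 0 < s ^ 2) by (apply pow_lt; lra).
  set (w := Rabs u). assert (Hw : 0 <= w) by apply Rabs_pos.
  assert (Eu : u ^ 2 = w ^ 2) by (unfold w; symmetry; apply pow2_abs).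
  assert (Ha : Rabs (1 + u / s ^ 2) <= 1 + w / s ^ 2).
  { eapply Rle_trans. apply Rabs_triang. rewrite Rabs_R1. unfold Rdiv. rewrite Rabs_mult.
    rewrite (Rabs_right (/ s^2)) by (left; apply Rinv_0_lt_compat; auto). unfold w. lra. }
  set (z := Rabs (w - r)). assert (Hz : 0 <= z) by apply Rabs_pos.
  assert (Hz2 : z ^ 2 = (w - r) ^ 2) by (unfold z; apply pow2_abs).
  assert (P1 : (1 + u ^ 2) * Rabs u <= (1 + r) ^ 3 * exp (3 * z)).
  { rewrite Eu. fold w.
    apply Rle_trans with ((1 + w) ^ 3). { simpl. nra. }
    apply Rle_trans with (((1 + r) * (1 + z)) ^ 3).
    { apply pow_incr. split. lra. unfold z. destruct (Rle_dec r w).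
      - rewrite Rabs_right by lra. nra.
      - rewrite Rabs_left1 by lra. nra. }
    rewrite Rpow_mult_distr. apply Rmult_le_compat_l. apply pow_le; lra.
    apply one_plus_cube; auto. }
  assert (P2 : exp (- u ^ 2 / (2 * s ^ 2)) * exp (Rabs (1 + u / s ^ 2) * r) * exp (3 * z)
              <= exp (9 * s ^ 2 / 2) * exp (r + r ^ 2 / (2 * s ^ 2))).
  { rewrite <- !exp_plus. apply exp_mono.
    assert (Rabs (1 + u / s ^ 2) * r <= (1 + w / s ^ 2) * r) by (apply Rmult_le_compat_r; auto).
    rewrite Eu.
    assert (Q : 3 * z - z ^ 2 / (2 * s ^ 2) <= 9 * s ^ 2 / 2).
    { apply Rmult_le_reg_l with (2 * s ^ 2). lra.
      replace (2 * s ^ 2 * (3 * z - z ^ 2 / (2 * s ^ 2))) with (6 * s^2 * z - z^2) by (field; lra).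
      replace (2 * s ^ 2 * (9 * s ^ 2 / 2)) with (9 * (s^2)^2) by field.
      assert (0 <= (z - 3 * s^2)^2) by apply pow2_ge_0. nra. }
    assert (Q2 : - w ^ 2 / (2 * s ^ 2) + (1 + w / s ^ 2) * r = r + r ^ 2 / (2 * s ^ 2) - z ^ 2 / (2 * s ^ 2)).
    { rewrite Hz2. field. lra. }
    lra. }
  unfold gauss_density. fold (N0 s). unfold K0.
  set (E1 := exp (- u ^ 2 / (2 * s ^ 2))). set (E2 := exp (Rabs (1 + u / s ^ 2) * r)).
  set (E3 := exp (3 * z)). fold E1 E2 E3 in P1, P2.
  assert (0 < E1) by apply exp_pos. assert (0 < E2) by apply exp_pos.
  apply Rle_trans with ((1 + r) ^ 3 * E3 * (E1 / N0 s) * E2).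
  { apply Rmult_le_compat_r. lra. apply Rmult_le_compat_r; auto.
    apply Rdiv_le_0_compat; lra. }
  apply Rle_trans with ((1 + r) ^ 3 * (exp (9 * s ^ 2 / 2) * exp (r + r ^ 2 / (2 * s ^ 2))) / N0 s).
  { replace ((1 + r) ^ 3 * E3 * (E1 / N0 s) * E2) with ((1 + r) ^ 3 * (E1 * E2 * E3) / N0 s) by (field; lra).
    unfold Rdiv. apply Rmult_le_compat_r. left; apply Rinv_0_lt_compat; auto.
    apply Rmult_le_compat_l. apply pow_le; lra. auto. }
  right. field. lra.
Qed.

Lemma cont_of_derive (f : R -> R) x : ex_derive f x -> continuous f x.
Proof. apply (ex_derive_continuous f). Qed.

Definition alpha s u := 1 + u / s ^ 2.
Definition cB s := - / (2 * s ^ 2).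

Lemma cont_dco s c n x : continuous (fun u => dco (alpha s u) c n) x.
Proof.
  unfold dco, PS_mult.
  apply (cont_sum (fun k u => ea (alpha s u) k * bc c (n - k)) n).
  intros k y. apply cont_of_derive. unfold ea, alpha. auto_derive. auto.
Qed.

Lemma cont_gauss s x : continuous (fun u => gauss_density s u) x.
Proof. unfold gauss_density. apply cont_of_derive. auto_derive. auto. Qed.

Lemma lip_cont l : one_lipschitz l -> forall x, continuous l x.
Proof.
  intros Hl x. apply continuity_pt_filterlim. intros eps Heps. exists eps. split; auto.
  intros y [_ Hy]. simpl in *. unfold R_dist in *. eapply Rle_lt_trans. apply Hl. auto.
Qed.

Lemma cont_mult (f g : R -> R) x : continuous f x -> continuous g x -> continuous (fun u => f u * g u) x.
Proof.
  intros Hf Hg. apply continuity_pt_filterlim. apply continuity_pt_mult; apply continuity_pt_filterlim; auto.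
Qed.

Lemma cont_minus (f g : R -> R) x : continuous f x -> continuous g x -> continuous (fun u => f u - g u) x.
Proof.
  intros Hf Hg. apply continuity_pt_filterlim. apply continuity_pt_minus; apply continuity_pt_filterlim; auto.
Qed.

Lemma cont_const (c : R) x : continuous (fun _ : R => c) x.
Proof. apply continuous_const. Qed.

Lemma gauss_shift s th u : 0 < s ->
  gauss_density s (th - u) = gauss_density s u * exp (- th) * (exp (alpha s u * th) * exp (cB s * th ^ 2)).
Proof.
  intros Hs. unfold gauss_density, alpha, cB.
  assert (E : exp (- (th - u) ^ 2 / (2 * s ^ 2)) = exp (- u ^ 2 / (2 * s ^ 2)) * exp (- th) *
     (exp ((1 + u / s ^ 2) * th) * exp (- / (2 * s ^ 2) * th ^ 2))).
  { rewrite <- !exp_plus. f_equal. field. lra. }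
  rewrite E. fold (N0 s). field. apply Rgt_not_eq, N0_pos; auto.
Qed.

Lemma gauss_shift0 s th u : 0 < s ->
  gauss_density s (0 - u) = gauss_density s u * exp (- th) * (exp (1 * th) * exp (0 * th ^ 2)).
Proof.
  intros Hs. rewrite Rmult_0_l, exp_0, Rmult_1_r, Rmult_1_l, Rmult_assoc, <- exp_plus.
  replace (- th + th) with 0 by ring. rewrite exp_0, Rmult_1_r.
  unfold gauss_density. f_equal. f_equal. f_equal. ring.
Qed.

Lemma abs_cB s : 0 < s -> Rabs (cB s) = / (2 * s ^ 2).
Proof.
  intros Hs. unfold cB. rewrite Rabs_Ropp, Rabs_right. auto.
  left; apply Rinv_0_lt_compat. assert (0 < s^2) by (apply pow_lt; lra). lra.
Qed.

Lemma gauss_pos s u : 0 < s -> 0 < gauss_density s u.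
Proof. intros. unfold gauss_density. apply Rdiv_lt_0_compat. apply exp_pos. apply N0_pos; auto. Qed.

Lemma K0_pos s : 0 < s -> 0 < K0 s.
Proof. intros. unfold K0. apply Rdiv_lt_0_compat. apply exp_pos. apply N0_pos; auto. Qed.

Lemma pt_bound s u r q A1 A2 : 0 < s -> 0 < r -> 0 <= q ->
  Rabs A1 <= exp (Rabs (alpha s u) * r + Rabs (cB s) * r ^ 2) * q ->
  Rabs A2 <= exp (Rabs 1 * r + Rabs 0 * r ^ 2) * q ->
  (1 + u ^ 2) * Rabs u * gauss_density s u * (Rabs A1 + Rabs A2)
  <= 2 * K0 s * ((1 + r) ^ 3 * exp (r + r ^ 2 / s ^ 2)) * q.
Proof.
  intros Hs Hr Hq H1 H2.
  rewrite abs_cB in H1 by auto. rewrite Rabs_R1, Rabs_R0, Rmult_0_l, Rplus_0_r, Rmult_1_l in H2.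
  assert (Hs2 : 0 < s ^ 2) by (apply pow_lt; lra).
  assert (HP : 0 <= (1 + u ^ 2) * Rabs u * gauss_density s u).
  { apply Rmult_le_pos. apply Rmult_le_pos. generalize (pow2_ge_0 u); lra. apply Rabs_pos. left; apply gauss_pos; auto. }
  assert (G1 := G_bound s u r Hs ltac:(lra)).
  assert (G0 := G_bound s u 0 Hs ltac:(lra)).
  rewrite Rmult_0_r, exp_0, Rmult_1_r in G0.
  replace ((1 + 0) ^ 3 * exp (0 + 0 ^ 2 / (2 * s ^ 2))) with 1 in G0
    by (replace (0 + 0 ^ 2 / (2 * s ^ 2)) with 0 by (field; lra); rewrite exp_0; ring).
  assert (E : exp (r + r ^ 2 / s ^ 2) = exp (r + r ^ 2 / (2 * s ^ 2)) * exp (/ (2 * s ^ 2) * r ^ 2)).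
  { rewrite <- exp_plus. f_equal. field. lra. }
  assert (Hc : 1 <= (1 + r) ^ 3 * exp (r ^ 2 / s ^ 2)).
  { assert (1 <= (1 + r) ^ 3) by (apply pow_R1_Rle; lra).
    assert (1 <= exp (r ^ 2 / s ^ 2)).
    { rewrite <- exp_0. apply exp_mono. apply Rdiv_le_0_compat; auto. apply pow2_ge_0. }
    nra. }
  assert (K0p := K0_pos s Hs).
  rewrite Rmult_plus_distr_l.
  apply Rle_trans with ((1 + u ^ 2) * Rabs u * gauss_density s u * (exp (Rabs (alpha s u) * r + / (2 * s ^ 2) * r ^ 2) * q)
     + (1 + u ^ 2) * Rabs u * gauss_density s u * (exp r * q)).
  { apply Rplus_le_compat; apply Rmult_le_compat_l; auto. }
  rewrite exp_plus.
  assert (X1 : (1 + u ^ 2) * Rabs u * gauss_density s u * (exp (Rabs (alpha s u) * r) * exp (/ (2 * s ^ 2) * r ^ 2) * q)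
     <= K0 s * ((1 + r) ^ 3 * exp (r + r ^ 2 / s ^ 2)) * q).
  { rewrite E. replace ((1 + u ^ 2) * Rabs u * gauss_density s u * (exp (Rabs (alpha s u) * r) * exp (/ (2 * s ^ 2) * r ^ 2) * q))
      with ((1 + u ^ 2) * Rabs u * gauss_density s u * exp (Rabs (alpha s u) * r) * (exp (/ (2 * s ^ 2) * r ^ 2) * q)) by ring.
    replace (K0 s * ((1 + r) ^ 3 * (exp (r + r ^ 2 / (2 * s ^ 2)) * exp (/ (2 * s ^ 2) * r ^ 2))) * q)
      with (K0 s * ((1 + r) ^ 3 * exp (r + r ^ 2 / (2 * s ^ 2))) * (exp (/ (2 * s ^ 2) * r ^ 2) * q)) by ring.
    apply Rmult_le_compat_r. apply Rmult_le_pos; auto. left; apply exp_pos.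
    unfold alpha in *. exact G1. }
  assert (X2 : (1 + u ^ 2) * Rabs u * gauss_density s u * (exp r * q)
     <= K0 s * ((1 + r) ^ 3 * exp (r + r ^ 2 / s ^ 2)) * q).
  { rewrite <- Rmult_assoc. apply Rmult_le_compat_r; auto.
    rewrite exp_plus. 
    apply Rle_trans with (K0 s * exp r). { apply Rmult_le_compat_r. left; apply exp_pos. rewrite Rmult_1_r in G0; exact G0. }
    replace (K0 s * ((1 + r) ^ 3 * (exp r * exp (r ^ 2 / s ^ 2)))) with (K0 s * exp r * ((1 + r) ^ 3 * exp (r ^ 2 / s ^ 2))) by ring.
    assert (0 < K0 s * exp r) by (apply Rmult_lt_0_compat; auto; apply exp_pos). nra. }
  lra.
Qed.

Lemma sum_lin (A B : nat -> R) (a th : R) m :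
  sum_f_R0 (fun x => th ^ x * (a * (A x - B x))) m
  = a * (sum_f_R0 (fun n => A n * th ^ n) m - sum_f_R0 (fun n => B n * th ^ n) m).
Proof. induction m; simpl. ring. rewrite IHm. ring. Qed.

Lemma lip_abs l : one_lipschitz l -> l 0 = 0 -> forall u, Rabs (l u) <= Rabs u.
Proof. intros Hl H0 u. specialize (Hl u 0). rewrite H0, !Rminus_0_r in Hl. auto. Qed.

Lemma dom_gth s l th : 0 < s -> 0 <= th -> one_lipschitz l -> l 0 = 0 ->
  forall u, Rabs (l u * gauss_density s (th - u)) <= K0 s * ((1 + th) ^ 3 * exp (th + th ^ 2 / (2 * s ^ 2))) / (1 + u ^ 2).
Proof.
  intros Hs Hth Hl H0 u.
  assert (Hu2 : 0 < 1 + u ^ 2) by (generalize (pow2_ge_0 u); lra).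
  apply Rmult_le_reg_r with (1 + u ^ 2); auto.
  unfold Rdiv. rewrite Rmult_assoc, Rinv_l, Rmult_1_r by lra.
  rewrite gauss_shift by auto.
  assert (G := G_bound s u th Hs Hth).
  assert (Hg := gauss_pos s u Hs).
  assert (E1 : exp (- th) <= 1) by (rewrite <- exp_0; apply exp_mono; lra).
  assert (E2 : exp (cB s * th ^ 2) <= 1).
  { rewrite <- exp_0; apply exp_mono. unfold cB.
    assert (0 < s^2) by (apply pow_lt; lra). assert (0 < / (2 * s^2)) by (apply Rinv_0_lt_compat; lra).
    assert (0 <= th^2) by apply pow2_ge_0. nra. }
  assert (E3 : exp (alpha s u * th) <= exp (Rabs (1 + u / s ^ 2) * th)).
  { apply exp_mono. apply Rmult_le_compat_r; auto. apply Rle_abs. }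
  assert (P : 0 < exp (- th)) by apply exp_pos.
  assert (P2 : 0 < exp (cB s * th ^ 2)) by apply exp_pos.
  assert (P3 : 0 < exp (alpha s u * th)) by apply exp_pos.
  set (X := exp (- th) * (exp (alpha s u * th) * exp (cB s * th ^ 2))).
  assert (HX : 0 < X) by (unfold X; repeat apply Rmult_lt_0_compat; auto).
  assert (HX1 : X <= exp (Rabs (1 + u / s ^ 2) * th)).
  { unfold X. apply Rle_trans with (1 * (exp (alpha s u * th) * 1)).
    { apply Rmult_le_compat; try lra. apply Rmult_le_pos; lra. apply Rmult_le_compat_l; lra. }
    lra. }
  replace (gauss_density s u * exp (- th) * (exp (alpha s u * th) * exp (cB s * th ^ 2))) with (gauss_density s u * X) by (unfold X; ring).
  rewrite !Rabs_mult, (Rabs_right (gauss_density s u)), (Rabs_right X) by lra.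
  eapply Rle_trans; [|exact G].
  assert (L := lip_abs l Hl H0 u).
  assert (0 <= Rabs (l u)) by apply Rabs_pos.
  replace (Rabs (l u) * (gauss_density s u * X) * (1 + u ^ 2)) with ((1 + u ^ 2) * Rabs (l u) * gauss_density s u * X) by ring.
  apply Rmult_le_compat; try lra.
  - apply Rmult_le_pos; [|lra]. apply Rmult_le_pos; lra.
  - apply Rmult_le_compat_r. lra. apply Rmult_le_compat_l; lra.
Qed.

Lemma smoothed_good s l th : 0 < s -> 0 <= th -> one_lipschitz l -> l 0 = 0 ->
  exists L, Good (fun u => l u * gauss_density s (th - u)) L /\ smoothed_loss l s th = L.
Proof.
  intros Hs Hth Hl H0.
  assert (Hc : forall x, continuous (fun u => l u * gauss_density s (th - u)) x).
  { intros x. apply cont_mult. apply lip_cont; auto.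
    apply (continuous_comp (fun u => th - u) (gauss_density s)). apply cont_of_derive; auto_derive; auto.
    apply cont_gauss. }
  destruct (dom_Good _ _ Hc (dom_gth s l th Hs Hth Hl H0)) as [L HL].
  exists L. split; auto.
  unfold smoothed_loss. apply Good_RInt_gen.
  - intros x. apply cont_mult; [|apply cont_gauss].
    apply lip_cont. intros a b. replace (a - b) with ((th - b) - (th - a)) by ring.
    rewrite (Rabs_minus_sym (l (th - a))). apply Hl.
  - apply Good_ext with (fun y => l (th - y) * gauss_density s (th - (th - y))).
    { intros y. f_equal. f_equal. ring. }
    apply (Good_refl (fun u => l u * gauss_density s (th - u))); auto.
Qed.

Lemma final_ineq K0v K3 X n pw tk : 0 < K0v -> 0 < K3 -> 0 <= pw -> 0 <= tk ->
  X <= K3 * 2 ^ n * pw / INR (fact n) ->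
  2 * K0v * tk * X * PI <= 2 * PI * K0v * K3 * sqrt (INR n + 1) * (2 ^ n * tk) * (1 + pw) / INR (fact n).
Proof.
  intros HK0 HK3 Hpw Htk HX.
  assert (Hf := fact_pos_R n).
  assert (Hsq : 1 <= sqrt (INR n + 1)).
  { assert (A := sqrt_le_1_alt 1 (INR n + 1) ltac:(generalize (pos_INR n); lra)). rewrite sqrt_1 in A. exact A. }
  assert (H2n : 0 < 2 ^ n) by (apply pow_lt; lra).
  assert (HPI := PI_RGT_0).
  apply Rle_trans with (2 * K0v * tk * (K3 * 2 ^ n * pw / INR (fact n)) * PI).
  { apply Rmult_le_compat_r. lra. apply Rmult_le_compat_l; auto. apply Rmult_le_pos; lra. }
  unfold Rdiv. 
  replace (2 * K0v * tk * (K3 * 2 ^ n * pw * / INR (fact n)) * PI)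
    with ((2 * PI * K0v * K3 * (2 ^ n * tk) * / INR (fact n)) * (1 * pw)) by ring.
  replace (2 * PI * K0v * K3 * sqrt (INR n + 1) * (2 ^ n * tk) * (1 + pw) * / INR (fact n))
    with ((2 * PI * K0v * K3 * (2 ^ n * tk) * / INR (fact n)) * (sqrt (INR n + 1) * (1 + pw))) by ring.
  apply Rmult_le_compat_l.
  - apply Rmult_le_pos; [|left; apply Rinv_0_lt_compat; auto].
    assert (0 <= 2 ^ n * tk) by (apply Rmult_le_pos; lra).
    assert (0 < 2 * PI * K0v * K3).
    { apply Rmult_lt_0_compat; auto. apply Rmult_lt_0_compat; auto. lra. }
    apply Rmult_le_pos; lra.
  - apply Rmult_le_compat; lra.
Qed.

Theorem lemma1 (theta_star sigma : R) (Hts : 0 < theta_star) (Hsig : 0 < sigma) :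
  exists C : R, 0 < C /\
  forall l : R -> R, one_lipschitz l -> l 0 = 0 ->
  forall k : nat, (1 <= k)%nat ->
  exists c : nat -> R,
    (forall x : nat, (x <= k - 1)%nat ->
       Rabs (c x) <= C * sqrt (INR x + 1) * 2 ^ x * (1 + pw_term x sigma) / INR (Factorial.fact x)) /\
    (forall theta : R, 0 <= theta <= theta_star ->
       Rabs (smoothed_loss l sigma theta - smoothed_loss l sigma 0
             - exp (- theta) * sum_f_R0 (fun x => c x * theta ^ x) (k - 1))
       <= C * sqrt (INR k + 1) * (2 * theta_star) ^ k * (1 + pw_term k sigma) / INR (Factorial.fact k)).
Proof.
  set (s := sigma) in *. set (t := theta_star) in *.
  destruct (Bnd_le s t Hsig Hts) as [K3 [HK3 HB]].
  assert (HK0 := K0_pos s Hsig).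
  exists (2 * PI * K0 s * K3). split.
  { assert (HPI := PI_RGT_0). apply Rmult_lt_0_compat; auto. apply Rmult_lt_0_compat; auto. lra. }
  intros l Hl Hl0 k Hk.
  assert (Hpw : forall n, 0 <= pw_term n s).
  { intros n; destruct n; simpl. lra. unfold Rpower. left; apply exp_pos. }
  set (H := fun n u => l u * gauss_density s u * (dco (alpha s u) (cB s) n - dco 1 0 n)).
  assert (HC : forall n x, continuous (H n) x).
  { intros n x. unfold H. apply cont_mult. apply cont_mult. apply lip_cont; auto. apply cont_gauss.
    apply cont_minus. apply cont_dco. apply cont_const. }
  assert (HD : forall n u, Rabs (H n u) <= (2 * K0 s * Bnd s t n) / (1 + u ^ 2)).
  { intros n u. set (r := rr s t n).
    assert (Hr : 0 < r) by (generalize (rr_pos s t n Hsig Hts); unfold r; lra).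
    assert (Hrn : 0 < r ^ n) by (apply pow_lt; auto).
    assert (Hu2 : 0 < 1 + u ^ 2) by (generalize (pow2_ge_0 u); lra).
    assert (P := pt_bound s u r (/ r ^ n) (dco (alpha s u) (cB s) n) (dco 1 0 n) Hsig Hr
                  ltac:(left; apply Rinv_0_lt_compat; auto) (coef_bound _ _ _ _ Hr) (coef_bound _ _ _ _ Hr)).
    apply Rmult_le_reg_r with (1 + u ^ 2); auto.
    unfold Rdiv. rewrite Rmult_assoc, Rinv_l, Rmult_1_r by lra.
    unfold Bnd. fold r.
    replace (2 * K0 s * ((1 + r) ^ 3 * exp (r + r ^ 2 / s ^ 2) / r ^ n))
      with (2 * K0 s * ((1 + r) ^ 3 * exp (r + r ^ 2 / s ^ 2)) * / r ^ n) by (unfold Rdiv; ring).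
    eapply Rle_trans; [|exact P].
    unfold H. rewrite !Rabs_mult. rewrite (Rabs_right (gauss_density s u)) by (left; apply gauss_pos; auto).
    assert (L := lip_abs l Hl Hl0 u).
    assert (0 <= Rabs (l u)) by apply Rabs_pos.
    assert (Hg := gauss_pos s u Hsig).
    assert (T : Rabs (dco (alpha s u) (cB s) n - dco 1 0 n) <= Rabs (dco (alpha s u) (cB s) n) + Rabs (dco 1 0 n)).
    { unfold Rminus. eapply Rle_trans. apply Rabs_triang. rewrite Rabs_Ropp. lra. }
    assert (0 <= Rabs (dco (alpha s u) (cB s) n - dco 1 0 n)) by apply Rabs_pos.
    replace (Rabs (l u) * gauss_density s u * Rabs (dco (alpha s u) (cB s) n - dco 1 0 n) * (1 + u ^ 2))
      with ((1 + u ^ 2) * Rabs (l u) * gauss_density s u * Rabs (dco (alpha s u) (cB s) n - dco 1 0 n)) by ring.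
    apply Rmult_le_compat; auto.
    - apply Rmult_le_pos; [|lra]. apply Rmult_le_pos; lra.
    - apply Rmult_le_compat_r. lra. apply Rmult_le_compat_l; lra. }
  set (c := fun n => RInt_gen (H n) (Rbar_locally m_infty) (Rbar_locally p_infty)).
  assert (HG : forall n, Good (H n) (c n)).
  { intros n. destruct (dom_Good (H n) _ (HC n) (HD n)) as [L HL].
    unfold c. rewrite (Good_RInt_gen (H n) L (HC n) HL). auto. }
  exists c. split.
  - intros x _.
    assert (Bx := Good_bound (H x) _ (c x) (HC x) (HD x) (HG x)).
    assert (F := final_ineq (K0 s) K3 (Bnd s t x) x (pw_term x s) 1 HK0 HK3 (Hpw x) ltac:(lra) (HB x)).
    rewrite !Rmult_1_r in F.
    eapply Rle_trans. exact Bx. eapply Rle_trans; [|exact F]. right. ring.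
  - intros th [Hth0 Hth].
    destruct (smoothed_good s l th Hsig Hth0 Hl Hl0) as [Lth [GLth Eth]].
    destruct (smoothed_good s l 0 Hsig ltac:(lra) Hl Hl0) as [L0 [GL0 E0]].
    fold s. rewrite Eth, E0.
    set (m := (k - 1)%nat). assert (Sm : S m = k) by (unfold m; lia).
    assert (Cg : forall th' x, continuous (fun u => l u * gauss_density s (th' - u)) x).
    { intros th' x. apply cont_mult. apply lip_cont; auto.
      apply (continuous_comp (fun u => th' - u) (gauss_density s)). apply cont_of_derive; auto_derive; auto.
      apply cont_gauss. }
    assert (HCs : forall x y, continuous (fun u => th ^ x * H x u) y).
    { intros x y. apply cont_mult. apply cont_const. apply HC. }
    set (Q := fun u => l u * gauss_density s (th - u) - l u * gauss_density s (0 - u)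
                       - exp (- th) * sum_f_R0 (fun x => th ^ x * H x u) m).
    assert (GQ : Good Q (Lth - L0 - exp (- th) * sum_f_R0 (fun x => th ^ x * c x) m)).
    { unfold Q. apply Good_minus.
      - intros x. apply cont_minus; apply Cg.
      - intros x. apply cont_mult. apply cont_const. apply (cont_sum (fun x u => th ^ x * H x u) m HCs).
      - apply Good_minus; auto.
      - apply Good_scal. apply (cont_sum (fun x u => th ^ x * H x u) m HCs).
        apply (Good_sum (fun x u => th ^ x * H x u) (fun x => th ^ x * c x) m HCs).
        intros x. apply Good_scal; auto. }
    set (r := rr s t k).
    assert (Htr : t <= r) by (apply rr_pos; auto).
    assert (Hr : 0 < r) by lra.
    assert (HQ : forall u, Rabs (Q u) <= 2 * K0 s * (t ^ k * Bnd s t k) / (1 + u ^ 2)).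
    { intros u.
      assert (Hu2 : 0 < 1 + u ^ 2) by (generalize (pow2_ge_0 u); lra).
      set (A1 := exp (alpha s u * th) * exp (cB s * th ^ 2) - sum_f_R0 (fun n => dco (alpha s u) (cB s) n * th ^ n) m).
      set (A2 := exp (1 * th) * exp (0 * th ^ 2) - sum_f_R0 (fun n => dco 1 0 n * th ^ n) m).
      assert (EQ : Q u = exp (- th) * (l u * gauss_density s u) * (A1 - A2)).
      { unfold Q, H, A1, A2. rewrite (gauss_shift s th u Hsig), (gauss_shift0 s th u Hsig).
        rewrite (sum_lin (fun n => dco (alpha s u) (cB s) n) (fun n => dco 1 0 n) (l u * gauss_density s u) th m).
        ring. }
      set (q := (th / r) ^ k).
      assert (Hq : 0 <= q) by (apply pow_le; apply Rdiv_le_0_compat; lra).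
      assert (TB1 := tail_bound (alpha s u) (cB s) r th m Hr ltac:(lra)).
      assert (TB2 := tail_bound 1 0 r th m Hr ltac:(lra)).
      fold A1 in TB1. fold A2 in TB2. rewrite Sm in TB1, TB2. fold q in TB1, TB2.
      rewrite Rmult_comm in TB1, TB2.
      assert (P := pt_bound s u r q A1 A2 Hsig Hr Hq TB1 TB2).
      assert (Hqt : q <= t ^ k / r ^ k).
      { unfold q. unfold Rdiv. rewrite Rpow_mult_distr, pow_inv. apply Rmult_le_compat_r.
        left; apply Rinv_0_lt_compat, pow_lt; auto. apply pow_incr; lra. }
      apply Rmult_le_reg_r with (1 + u ^ 2); auto.
      unfold Rdiv at 1. rewrite Rmult_assoc, Rinv_l, Rmult_1_r by lra.
      apply Rle_trans with (2 * K0 s * ((1 + r) ^ 3 * exp (r + r ^ 2 / s ^ 2)) * q).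
      - eapply Rle_trans; [|exact P]. rewrite EQ.
        rewrite !Rabs_mult. rewrite (Rabs_right (exp _)) by (left; apply exp_pos).
        rewrite (Rabs_right (gauss_density s u)) by (left; apply gauss_pos; auto).
        assert (L := lip_abs l Hl Hl0 u).
        assert (0 <= Rabs (l u)) by apply Rabs_pos.
        assert (Hg := gauss_pos s u Hsig).
        assert (Ee : exp (- th) <= 1) by (rewrite <- exp_0; apply exp_mono; lra).
        assert (0 < exp (- th)) by apply exp_pos.
        assert (T : Rabs (A1 - A2) <= Rabs A1 + Rabs A2).
        { unfold Rminus. eapply Rle_trans. apply Rabs_triang. rewrite Rabs_Ropp. lra. }
        assert (0 <= Rabs (A1 - A2)) by apply Rabs_pos.
        replace (exp (- th) * (Rabs (l u) * gauss_density s u) * Rabs (A1 - A2) * (1 + u ^ 2))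
          with (exp (- th) * ((1 + u ^ 2) * Rabs (l u) * gauss_density s u * Rabs (A1 - A2))) by ring.
        assert (Z : (1 + u ^ 2) * Rabs (l u) * gauss_density s u * Rabs (A1 - A2)
                    <= (1 + u ^ 2) * Rabs u * gauss_density s u * (Rabs A1 + Rabs A2)).
        { apply Rmult_le_compat; auto.
          - apply Rmult_le_pos; [|lra]. apply Rmult_le_pos; lra.
          - apply Rmult_le_compat_r. lra. apply Rmult_le_compat_l; lra. }
        assert (0 <= (1 + u ^ 2) * Rabs (l u) * gauss_density s u * Rabs (A1 - A2)).
        { apply Rmult_le_pos; auto. apply Rmult_le_pos; [|lra]. apply Rmult_le_pos; lra. }
        nra.
      - unfold Bnd. fold r.
        assert (0 <= 2 * K0 s * ((1 + r) ^ 3 * exp (r + r ^ 2 / s ^ 2))).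
        { apply Rmult_le_pos. lra. apply Rmult_le_pos. apply pow_le; lra. left; apply exp_pos. }
        apply Rle_trans with (2 * K0 s * ((1 + r) ^ 3 * exp (r + r ^ 2 / s ^ 2)) * (t ^ k / r ^ k)).
        + apply Rmult_le_compat_l; auto.
        + right. unfold Rdiv. ring. }
    assert (CQ : forall x, continuous Q x).
    { intros x. unfold Q. apply cont_minus. apply cont_minus; apply Cg.
      apply cont_mult. apply cont_const. apply (cont_sum (fun x u => th ^ x * H x u) m HCs). }
    assert (BQ := Good_bound Q _ _ CQ HQ GQ).
    assert (F := final_ineq (K0 s) K3 (Bnd s t k) k (pw_term k s) (t ^ k) HK0 HK3 (Hpw k)
                   ltac:(apply pow_le; lra) (HB k)).
    replace (sum_f_R0 (fun x => c x * th ^ x) m) with (sum_f_R0 (fun x => th ^ x * c x) m)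
      by (apply sum_eq; intros; ring).
    rewrite Rpow_mult_distr.
    eapply Rle_trans. exact BQ. eapply Rle_trans; [|exact F]. right. ring.
Qed.
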